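(* Let $(\beta(\cdot),\gamma(\cdot))$ be the bribing and requesting functions of any pure-strategy separating weak perfect Bayesian equilibrium of the double-option game, and let $\pi(v_1;\beta,\gamma)$ be the interim expected payoff of type $v_1$ of bidder 1 in that equilibrium. Then $\pi(v_1)\ge\pi(v_1;\beta,\gamma)$ for every $v_1\in[\underline v_1,\bar v_1]$, where $\pi(v_1)$ is type $v_1$'s interim payoff in the equilibrium $E^*$.
   Context: Setting: two risk-neutral bidders; bidder $i$'s private valuation $v_i$ is independently distributed with cdf $F_i$ on $[\underline v_i,\bar v_i]$, $0\le\underline v_i<\bar v_i<\infty$, continuous density $0<f_i<\infty$ there; $F_2$ is extended by $0$ below $\underline v_2$ and $1$ above $\bar v_2$; $\underline v_1<\bar v_2$. Double-option game: bidder 1 learns $v_1$ and proposes $(b,r)$, $b,r\ge0$; bidder 2 learns $v_2$ and accepts the bribe (payoffs $(v_1-b,b)$), accepts the request (payoffs $(r,v_2-r)$), or rejects and both bid truthfully in a second-price auction with no reserve (payoffs $((v_1-v_2)^+,(v_2-v_1)^+)$). In a weak perfect Bayesian equilibrium bidder 2 forms beliefs by Bayes' rule on path and best-responds; when indifferent between accepting and rejecting she accepts, and when indifferent between the two options she accepts the bribe. A pure-strategy equilibrium is separating if $v_1\mapsto(\beta(v_1),\gamma(v_1))$ is injective. Equilibrium $E^*$: $b$ solves $b'(v_1)=\frac{1}{f_2(b(v_1)+v_1)b(v_1)+F_2(b(v_1)+v_1)}-1$, $b(\underline v_1)=0$, up to $v^1$ (the smallest $v_1$ with $b(v_1)+v_1=\bar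 v_2$, or $\bar v_1$ if none), and $b(v_1)=b(v^1)$ beyond; type $v_1$ proposes $(b(v_1),v_1)$ and bidder 2 accepts the bribe iff $v_2\le b(v_1)+v_1$, otherwise accepts the request; thus $\pi(v_1)=v_1-F_2(b(v_1)+v_1)b(v_1)$. *)

(* Defs.v *)
From Stdlib Require Import Reals Lra ClassicalEpsilon.
Open Scope R_scope.

(** Total Riemann integral: the Stdlib Riemann integral when f is Riemann
    integrable on [a,b] (value independent of the integrability proof),
    and 0 otherwise.  All integrands used below are Riemann integrable. *)
Definition RInt (f : R -> R) (a b : R) : R :=
  match excluded_middle_informative (inhabited (Riemann_integrable f a b)) with
  | left H =>
      RiemannInt (proj1_sig (constructive_indefinite_description
                   (fun _ : Riemann_integrable f a b => True)
                   (match H with inhabits pr => ex_intro _ pr I end)))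
  | right _ => 0
  end.

Definition has_density (lo hi : R) (F f : R -> R) : Prop :=
  (forall x, x <= lo -> F x = 0) /\
  (forall x, hi <= x -> F x = 1) /\
  continuity F /\
  (forall x, lo < x < hi -> derivable_pt_lim F x (f x)) /\
  (forall x, lo <= x <= hi -> continue_in f (fun y => lo <= y <= hi) x) /\
  (forall x, lo <= x <= hi -> 0 < f x) /\
  (forall x, x < lo \/ hi < x -> f x = 0).

(** A belief of bidder 2 about v1: an arbitrary probability distribution on
    [lo,hi], represented by its cdf G (nondecreasing, right-continuous,
    0 below lo, 1 from hi on). *)
Definition is_belief_cdf (lo hi : R) (G : R -> R) : Prop :=
  (forall x y, x <= y -> G x <= G y) /\
  (forall x, x < lo -> G x = 0) /\
  (forall x, hi <= x -> G x = 1) /\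
  (forall x, continue_in G (fun y => x <= y) x).

Definition point_cdf (v : R) : R -> R := fun x => if Rle_dec v x then 1 else 0.

(** Bidder 2's expected payoff from rejecting, E_G[(v2 - v1)^+],
    written as the integral of the cdf: int_{lo}^{v2} G(t) dt. *)
Definition reject_payoff (lo : R) (G : R -> R) (v2 : R) : R :=
  if Rle_dec lo v2 then RInt G lo v2 else 0.

Inductive action := Bribe | Request | Reject.

(** Bidder 2's best response to (b,r) given her reject payoff J, with the
    tie-breaking: accept when indifferent between accepting and rejecting,
    accept the bribe when indifferent between the two options. *)
Definition resp (b r v2 J : R) : action :=
  if Rle_dec (v2 - r) b then
    (if Rle_dec J b then Bribe
     else if Rle_dec J (v2 - r) then Request else Reject)
  else if Rle_dec J (v2 - r) then Request else Reject.

Definition u1 (v1 b r v2 : R) (a : action) : R :=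
  match a with
  | Bribe => v1 - b
  | Request => r
  | Reject => Rmax 0 (v1 - v2)
  end.

Definition interim1 (lo1 lo2 hi2 : R) (f2 : R -> R)
    (v1 b r : R) (G : R -> R) : R :=
  RInt (fun v2 => u1 v1 b r v2 (resp b r v2 (reject_payoff lo1 G v2)) * f2 v2)
       lo2 hi2.

(** Pure-strategy separating weak PBE: bribing function beta, requesting
    function gamma, and bidder 2's belief system mu (a belief cdf for each
    proposal (b,r)); bidder 2's strategy is her (tie-broken) best response. *)
Definition separating_wPBE (lo1 hi1 lo2 hi2 : R) (f2 : R -> R)
    (beta gamma : R -> R) (mu : R -> R -> (R -> R)) : Prop :=
  (forall v, lo1 <= v <= hi1 -> 0 <= beta v /\ 0 <= gamma v) /\
  (forall v w, lo1 <= v <= hi1 -> lo1 <= w <= hi1 ->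
      beta v = beta w -> gamma v = gamma w -> v = w) /\
  (forall b r, is_belief_cdf lo1 hi1 (mu b r)) /\
  (forall v, lo1 <= v <= hi1 -> forall x, mu (beta v) (gamma v) x = point_cdf v x) /\
  (forall v, lo1 <= v <= hi1 -> forall b r, 0 <= b -> 0 <= r ->
      interim1 lo1 lo2 hi2 f2 v b r (mu b r)
      <= interim1 lo1 lo2 hi2 f2 v (beta v) (gamma v) (mu (beta v) (gamma v))).

Definition eq_payoff (lo1 lo2 hi2 : R) (f2 : R -> R)
    (beta gamma : R -> R) (mu : R -> R -> (R -> R)) (v1 : R) : R :=
  interim1 lo1 lo2 hi2 f2 v1 (beta v1) (gamma v1) (mu (beta v1) (gamma v1)).

Definition Estar_bribe (lo1 hi1 hi2 : R) (F2 f2 : R -> R) (b : R -> R) : Prop :=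
  exists vh, lo1 <= vh <= hi1 /\
    b lo1 = 0 /\
    (forall v, lo1 <= v <= vh -> continue_in b (fun y => lo1 <= y <= vh) v) /\
    (forall v, lo1 < v < vh ->
        derivable_pt_lim b v (1 / (f2 (b v + v) * b v + F2 (b v + v)) - 1)) /\
    ((b vh + vh = hi2 /\ forall v, lo1 <= v < vh -> b v + v <> hi2) \/
     (vh = hi1 /\ forall v, lo1 <= v <= hi1 -> b v + v <> hi2)) /\
    (forall v, vh < v <= hi1 -> b v = b vh).

Definition Estar_payoff (F2 : R -> R) (b : R -> R) (v1 : R) : R :=
  v1 - F2 (b v1 + v1) * b v1.

(* Main.v *)
Require Import Defs.
From Stdlib Require Import Reals Lra Psatz FunctionalExtensionality ClassicalEpsilon Classical.
From Coquelicot Require Import Coquelicot.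
Open Scope R_scope.

Lemma defs_RInt_is f a b l : is_RInt f a b l -> Defs.RInt f a b = l.
Proof.
  intros H. assert (Hex: ex_RInt f a b) by (exists l; exact H).
  pose proof (ex_RInt_Reals_0 _ _ _ Hex) as pr.
  unfold Defs.RInt. destruct excluded_middle_informative as [Hi|Hn].
  - rewrite <- RInt_Reals. apply is_RInt_unique; exact H.
  - exfalso; apply Hn; constructor; exact pr.
Qed.

Lemma is_RInt_val (f : R -> R) a b l l' : is_RInt f a b l -> l = l' -> is_RInt f a b l'.
Proof. intros H E; subst; exact H. Qed.

Definition clamp (lo hi x : R) := Rmax lo (Rmin hi x).

Lemma clamp_lip lo hi x y : lo <= hi -> Rabs (clamp lo hi x - clamp lo hi y) <= Rabs (x - y).
Proof. intros. unfold clamp, Rmax, Rmin. repeat destruct Rle_dec; split_Rabs; lra. Qed.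

Lemma clamp_in lo hi x : lo <= hi -> lo <= clamp lo hi x <= hi.
Proof. intros. unfold clamp, Rmax, Rmin. repeat destruct Rle_dec; lra. Qed.

Lemma clamp_id lo hi x : lo <= x <= hi -> clamp lo hi x = x.
Proof. intros. unfold clamp, Rmax, Rmin. repeat destruct Rle_dec; lra. Qed.

Section F2facts.
Variables (lo2 hi2 : R) (F2 f2 : R -> R).
Hypothesis HF2 : has_density lo2 hi2 F2 f2.
Hypothesis H2 : lo2 < hi2.

Lemma F2_clamp x : F2 x = F2 (clamp lo2 hi2 x).
Proof.
  destruct HF2 as [Hlo [Hhi _]].
  destruct (Rle_dec x lo2).
  - assert (E : clamp lo2 hi2 x = lo2) by (unfold clamp, Rmax, Rmin; repeat destruct Rle_dec; lra).
    rewrite E, !Hlo by lra. reflexivity.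
  - destruct (Rle_dec hi2 x).
    + assert (E : clamp lo2 hi2 x = hi2) by (unfold clamp, Rmax, Rmin; repeat destruct Rle_dec; lra).
      rewrite E, !Hhi by lra. reflexivity.
    + rewrite clamp_id by lra. reflexivity.
Qed.

Lemma F2_mono_in x y : lo2 <= x -> x <= y -> y <= hi2 -> F2 x <= F2 y.
Proof.
  intros h1 h2 h3. destruct HF2 as [Hlo [Hhi [Hc [Hd [Hfc [Hpos Hout]]]]]].
  destruct (Req_dec x y) as [E|NE]; [subst; lra|].
  destruct (MVT_gen F2 x y f2) as [c [Hc1 Hc2]].
  - intros z Hz. rewrite Rmin_left in Hz by lra. rewrite Rmax_right in Hz by lra.
    apply is_derive_Reals. apply Hd. lra.
  - intros z _. apply Hc.
  - rewrite Rmin_left in Hc1 by lra. rewrite Rmax_right in Hc1 by lra.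
    assert (0 < f2 c) by (apply Hpos; lra). nra.
Qed.

Lemma F2_mono x y : x <= y -> F2 x <= F2 y.
Proof.
  intros. rewrite (F2_clamp x), (F2_clamp y).
  pose proof (clamp_in lo2 hi2 x). pose proof (clamp_in lo2 hi2 y).
  apply F2_mono_in; try lra.
  unfold clamp, Rmax, Rmin. repeat destruct Rle_dec; lra.
Qed.

Lemma F2_bounds x : 0 <= F2 x <= 1.
Proof.
  destruct HF2 as [Hlo [Hhi _]].
  split.
  - rewrite <- (Hlo (Rmin x lo2)) by (apply Rmin_r). apply F2_mono, Rmin_l.
  - rewrite <- (Hhi (Rmax x hi2)) by (apply Rmax_r). apply F2_mono, Rmax_l.
Qed.

Lemma f2_nonneg x : 0 <= f2 x.
Proof.
  destruct HF2 as [Hlo [Hhi [Hc [Hd [Hfc [Hpos Hout]]]]]].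
  destruct (Rlt_dec x lo2). rewrite Hout; lra.
  destruct (Rlt_dec hi2 x). rewrite Hout; lra.
  apply Rlt_le, Hpos; lra.
Qed.

Lemma F2_deriv x : x <> lo2 -> x <> hi2 -> derivable_pt_lim F2 x (f2 x).
Proof.
  intros n1 n2. destruct HF2 as [Hlo [Hhi [Hc [Hd [Hfc [Hpos Hout]]]]]].
  destruct (Rlt_dec x lo2).
  - rewrite Hout by lra. intros eps Heps.
    assert (Hd0 : 0 < lo2 - x) by lra. exists (mkposreal _ Hd0). simpl.
    intros h hn hh. rewrite !Hlo by (split_Rabs; lra).
    replace ((0 - 0) / h - 0) with 0 by (field; auto). rewrite Rabs_R0; lra.
  - destruct (Rlt_dec hi2 x).
    + rewrite Hout by lra. intros eps Heps.
      assert (Hd0 : 0 < x - hi2) by lra. exists (mkposreal _ Hd0). simpl.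
      intros h hn hh. rewrite !Hhi by (split_Rabs; lra).
      replace ((1 - 1) / h - 0) with 0 by (field; auto). rewrite Rabs_R0; lra.
    + apply Hd. lra.
Qed.

Definition f2e x := f2 (clamp lo2 hi2 x).

Lemma f2e_cont x : continuous f2e x.
Proof.
  apply continuity_pt_filterlim.
  destruct HF2 as [Hlo [Hhi [Hc [Hd [Hfc [Hpos Hout]]]]]].
  pose proof (clamp_in lo2 hi2 x (Rlt_le _ _ H2)) as Hin.
  intros eps Heps. destruct (Hfc _ Hin eps Heps) as [alp [Halp H]].
  exists alp. split; auto. intros y [_ Hy]. simpl in *. unfold R_dist in *. unfold f2e.
  destruct (Req_dec (clamp lo2 hi2 y) (clamp lo2 hi2 x)) as [E|NE].
  - rewrite E. unfold Rminus. rewrite Rplus_opp_r, Rabs_R0. lra.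
  - apply H. split.
    + split. apply clamp_in; lra. auto.
    + simpl. unfold R_dist. eapply Rle_lt_trans. apply clamp_lip; lra. auto.
Qed.

Lemma f2e_ex a b : ex_RInt f2e a b.
Proof. apply (@ex_RInt_continuous R_CompleteNormedModule). intros; apply f2e_cont. Qed.

Definition Phi y := RInt f2e lo2 y.

Lemma Phi_F2 y : lo2 <= y <= hi2 -> Phi y = F2 y.
Proof.
  intros Hy. destruct HF2 as [Hlo [Hhi [Hc [Hd [Hfc [Hpos Hout]]]]]].
  assert (Hder : forall z, is_derive Phi z (f2e z)).
  { intros z. apply is_derive_RInt with (a := lo2).
    apply filter_forall. intros w. apply (@RInt_correct R_CompleteNormedModule), f2e_ex. apply f2e_cont. }
  destruct (Req_dec y lo2) as [E|NE].
  { subst. unfold Phi. rewrite RInt_point, Hlo by lra. reflexivity. }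
  destruct (MVT_gen (fun z => Phi z - F2 z) lo2 y (fun _ => 0)) as [c [_ Hc2]].
  - intros z Hz. rewrite Rmin_left in Hz by lra. rewrite Rmax_right in Hz by lra.
    apply is_derive_ext with (fun z => minus (Phi z) (F2 z)). reflexivity.
    replace 0 with (minus (f2e z) (f2 z)).
    apply (@is_derive_minus R_AbsRing R_NormedModule). apply Hder. apply is_derive_Reals, Hd; lra.
    unfold f2e. rewrite clamp_id by lra. unfold minus, plus, opp; simpl. ring.
  - intros z _. apply continuity_pt_minus.
    apply continuity_pt_filterlim. apply (@ex_derive_continuous R_AbsRing R_NormedModule). eexists; apply Hder.
    apply Hc.
  - unfold Phi in *. rewrite RInt_point in Hc2. rewrite (Hlo lo2) in Hc2 by lra.
    unfold zero in Hc2; simpl in Hc2. lra.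
Qed.

Lemma integ_step A C k :
  is_RInt (fun x => f2 x * (if Rle_dec x k then A else C)) lo2 hi2
          (A * F2 k + C * (1 - F2 k)).
Proof.
  set (k' := clamp lo2 hi2 k).
  pose proof (clamp_in lo2 hi2 k (Rlt_le _ _ H2)) as Hk.
  fold k' in Hk.
  assert (I1 : is_RInt (fun x => f2 x * (if Rle_dec x k then A else C)) lo2 k' (A * Phi k')).
  { apply (@is_RInt_ext R_NormedModule) with (fun x => scal A (f2e x)).
    - intros x Hx. rewrite Rmin_left in Hx by lra. rewrite Rmax_right in Hx by lra.
      unfold f2e. rewrite clamp_id by lra. destruct Rle_dec as [_|n].
      apply Rmult_comm.
      exfalso. apply n. unfold k', clamp, Rmax, Rmin in Hx. repeat destruct Rle_dec; lra.
    - apply (@is_RInt_scal R_NormedModule). apply (@RInt_correct R_CompleteNormedModule), f2e_ex. }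
  assert (I2 : is_RInt (fun x => f2 x * (if Rle_dec x k then A else C)) k' hi2 (C * RInt f2e k' hi2)).
  { apply (@is_RInt_ext R_NormedModule) with (fun x => scal C (f2e x)).
    - intros x Hx. rewrite Rmin_left in Hx by lra. rewrite Rmax_right in Hx by lra.
      unfold f2e. rewrite clamp_id by lra. destruct Rle_dec as [l|_].
      exfalso. unfold k', clamp, Rmax, Rmin in Hx. repeat destruct Rle_dec; lra.
      apply Rmult_comm.
    - apply (@is_RInt_scal R_NormedModule). apply (@RInt_correct R_CompleteNormedModule), f2e_ex. }
  eapply is_RInt_val. apply (is_RInt_Chasles _ _ _ _ _ _ I1 I2).
  assert (E : plus (RInt f2e lo2 k') (RInt f2e k' hi2) = RInt f2e lo2 hi2)
    by (apply RInt_Chasles; apply f2e_ex).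
  change (plus (RInt f2e lo2 k') (RInt f2e k' hi2)) with (RInt f2e lo2 k' + RInt f2e k' hi2) in E.
  assert (E2 : RInt f2e k' hi2 = Phi hi2 - Phi k') by (unfold Phi; lra).
  rewrite E2, !Phi_F2 by lra.
  destruct HF2 as [Hlo [Hhi _]]. rewrite (Hhi hi2) by lra.
  rewrite (F2_clamp k). fold k'. change (plus (A * F2 k') (C * (1 - F2 k'))) with (A * F2 k' + C * (1 - F2 k')).
  reflexivity.
Qed.

End F2facts.

Lemma reject_point lo1 w v2 : lo1 <= w ->
  reject_payoff lo1 (point_cdf w) v2 = Rmax 0 (v2 - w).
Proof.
  intros Hw. unfold reject_payoff. destruct (Rle_dec lo1 v2) as [h|h].
  - apply defs_RInt_is. destruct (Rle_dec v2 w).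
    + rewrite Rmax_left by lra.
      eapply is_RInt_val.
      apply (@is_RInt_ext R_NormedModule) with (fun _ => 0).
      2: apply (@is_RInt_const R_NormedModule).
      intros x Hx. rewrite Rmin_left in Hx by lra. rewrite Rmax_right in Hx by lra.
      unfold point_cdf. destruct Rle_dec; [lra|reflexivity].
      apply Rmult_0_r.
    + rewrite Rmax_right by lra.
      eapply is_RInt_val.
      eapply (@is_RInt_Chasles R_NormedModule) with (b := w).
      apply (@is_RInt_ext R_NormedModule) with (fun _ => 0).
      2: apply (@is_RInt_const R_NormedModule).
      intros x Hx. rewrite Rmin_left in Hx by lra. rewrite Rmax_right in Hx by lra.
      unfold point_cdf. destruct Rle_dec; [lra|reflexivity].
      apply (@is_RInt_ext R_NormedModule) with (fun _ => 1).
      2: apply (@is_RInt_const R_NormedModule).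
      intros x Hx. rewrite Rmin_left in Hx by lra. rewrite Rmax_right in Hx by lra.
      unfold point_cdf. destruct Rle_dec; [reflexivity|lra].
      change (@eq R ((w - lo1) * 0 + (v2 - w) * 1) (v2 - w)). ring.
  - rewrite Rmax_left by lra. reflexivity.
Qed.

Lemma pay lo1 lo2 hi2 F2 f2 (HF2 : has_density lo2 hi2 F2 f2) (H2 : lo2 < hi2) v w b r :
  lo1 <= w -> v <= w -> 0 <= b -> 0 <= r ->
  interim1 lo1 lo2 hi2 f2 v b r (point_cdf w) =
  (v - b) * F2 (b + Rmin r w) + (if Rle_dec r w then r else 0) * (1 - F2 (b + Rmin r w)).
Proof.
  intros Hw Hvw Hb Hr. unfold interim1.
  rewrite (functional_extensionality
    (fun v2 => u1 v b r v2 (resp b r v2 (reject_payoff lo1 (point_cdf w) v2)) * f2 v2)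
    (fun x => f2 x * (if Rle_dec x (b + Rmin r w) then (v - b) else (if Rle_dec r w then r else 0)))).
  - apply defs_RInt_is. apply (integ_step lo2 hi2 F2 f2 HF2 H2).
  - intros x. rewrite reject_point by lra. unfold resp, u1, Rmin, Rmax.
    repeat destruct Rle_dec; try (exfalso; lra); ring.
Qed.

Lemma der_V (bstar F2 : R -> R) t db dF :
  is_derive bstar t db -> is_derive F2 (bstar t + t) dF ->
  is_derive (fun v => v - F2 (bstar v + v) * bstar v) t
            (1 - (dF * (db + 1) * bstar t + F2 (bstar t + t) * db)).
Proof.
  intros Hb HF.
  assert (Hs : is_derive (fun v => bstar v + v) t (db + 1)).
  { apply (@is_derive_plus R_AbsRing R_NormedModule (fun v => bstar v) (fun v => v)). exact Hb.
    apply (@is_derive_id R_AbsRing). }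
  assert (Hc : is_derive (fun v => F2 (bstar v + v)) t ((db + 1) * dF)).
  { apply (@is_derive_comp R_AbsRing R_NormedModule F2 (fun v => bstar v + v)); auto. }
  assert (Hp : is_derive (fun v => F2 (bstar v + v) * bstar v) t
             ((db + 1) * dF * bstar t + F2 (bstar t + t) * db)).
  { apply (@is_derive_mult R_AbsRing (fun v => F2 (bstar v + v)) bstar); auto.
    intros; apply Rmult_comm. }
  assert (Hm := @is_derive_minus R_AbsRing R_NormedModule (fun v => v) _ t 1 _ (@is_derive_id R_AbsRing t) Hp).
  replace (1 - (dF * (db + 1) * bstar t + F2 (bstar t + t) * db))
    with (minus 1 ((db + 1) * dF * bstar t + F2 (bstar t + t) * db)).
  exact Hm.
  unfold minus, plus, opp; simpl. ring.
Qed.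

Lemma V_cont (F2 bstar : R -> R) (D : R -> Prop) t :
  continuity F2 -> continue_in bstar D t ->
  forall eps, 0 < eps -> exists d, 0 < d /\ forall u, D u -> Rabs (u - t) < d ->
    Rabs ((u - F2 (bstar u + u) * bstar u) - (t - F2 (bstar t + t) * bstar t)) < eps.
Proof.
  intros Hc Hb.
  assert (Hid : limit1_in (fun v => v) (D_x D t) t t).
  { intros eps Heps. exists eps. split; auto. intros x [_ H]. exact H. }
  assert (Hs := limit_plus _ _ _ _ _ _ Hb Hid).
  assert (HF : limit1_in (fun v => F2 (bstar v + v)) (D_x D t) (F2 (bstar t + t)) t).
  { intros eps Heps. destruct (Hc (bstar t + t) eps Heps) as [a [Ha H]].
    destruct (Hs a Ha) as [d [Hd H']]. exists d. split; auto.
    intros u [Du Hu]. destruct (Req_dec (bstar u + u) (bstar t + t)) as [E|NE].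
    - rewrite E. simpl. unfold R_dist. unfold Rminus. rewrite Rplus_opp_r, Rabs_R0. lra.
    - apply H. split. split. exact I. auto. apply H'. split; auto. }
  assert (HP := limit_mul _ _ _ _ _ _ HF Hb).
  assert (HV := limit_minus _ _ _ _ _ _ Hid HP).
  intros eps Heps. destruct (HV eps Heps) as [a [Ha H]]. exists a. split; auto.
  intros u Du Hu. destruct (Req_dec u t) as [E|NE].
  - subst. match goal with |- Rabs ?x < _ => replace x with 0 by ring end. rewrite Rabs_R0; lra.
  - apply H. split. split; auto. simpl. unfold R_dist. exact Hu.
Qed.

Theorem proposition4
  (lo1 hi1 lo2 hi2 : R) (F1 f1 F2 f2 : R -> R)
  (Hlo1 : 0 <= lo1) (H1 : lo1 < hi1) (Hlo2 : 0 <= lo2) (H2 : lo2 < hi2)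
  (H12 : lo1 < hi2)
  (HF1 : has_density lo1 hi1 F1 f1) (HF2 : has_density lo2 hi2 F2 f2)
  (bstar : R -> R) (Hbstar : Estar_bribe lo1 hi1 hi2 F2 f2 bstar)
  (beta gamma : R -> R) (mu : R -> R -> (R -> R))
  (Heq : separating_wPBE lo1 hi1 lo2 hi2 f2 beta gamma mu) :
  forall v1, lo1 <= v1 <= hi1 ->
    eq_payoff lo1 lo2 hi2 f2 beta gamma mu v1 <= Estar_payoff F2 bstar v1.
Proof.
  intros v1 Hv1.
  destruct Heq as [Hbr [_ [_ [Hpt Hic]]]].
  pose proof (F2_bounds lo2 hi2 F2 f2 HF2 H2) as FB.
  pose proof (F2_mono lo2 hi2 F2 f2 HF2 H2) as FM.
  pose proof HF2 as HF2'. destruct HF2' as [Hlo [Hhi [Hcont _]]].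
  set (U := fun v => eq_payoff lo1 lo2 hi2 f2 beta gamma mu v).
  set (K := fun v => beta v + Rmin (gamma v) v).
  set (Cc := fun v => if Rle_dec (gamma v) v then gamma v else 0).
  assert (HU : forall v, lo1 <= v <= hi1 ->
            U v = (v - beta v) * F2 (K v) + Cc v * (1 - F2 (K v))).
  { intros v Hv. unfold U, eq_payoff.
    replace (mu (beta v) (gamma v)) with (point_cdf v)
      by (apply functional_extensionality; intros x; symmetry; apply Hpt; auto).
    destruct (Hbr v Hv). apply pay; auto; lra. }
  assert (HUv : forall v, lo1 <= v <= hi1 -> U v <= v /\ U v <= v - (K v - v) * F2 (K v)).
  { intros v Hv. rewrite HU by auto. destruct (Hbr v Hv) as [hb hg]. pose proof (FB (K v)).
    unfold K, Cc in *. unfold Rmin in *. destruct Rle_dec; split; nra. }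
  assert (HUm : forall w t, lo1 <= w -> w <= t -> t <= hi1 ->
            U t - U w <= (t - w) * F2 (K t)).
  { intros w t h1 h2 h3.
    destruct (Hbr t ltac:(lra)) as [hb hg].
    pose proof (Hic w ltac:(lra) (beta t) (gamma t) hb hg) as Hi.
    replace (mu (beta t) (gamma t)) with (point_cdf t) in Hi
      by (apply functional_extensionality; intros x; symmetry; apply Hpt; lra).
    rewrite (pay lo1 lo2 hi2 F2 f2 HF2 H2) in Hi by lra.
    change (beta t + Rmin (gamma t) t) with (K t) in Hi.
    change (if Rle_dec (gamma t) t then gamma t else 0) with (Cc t) in Hi.
    change (interim1 lo1 lo2 hi2 f2 w (beta w) (gamma w) (mu (beta w) (gamma w))) with (U w) in Hi.
    rewrite (HU t) by lra.
    assert (E : (w - beta t) * F2 (K t) + Cc t * (1 - F2 (K t)) =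
                ((t - beta t) * F2 (K t) + Cc t * (1 - F2 (K t))) - (t - w) * F2 (K t)) by ring.
    lra. }
  assert (HUup : forall w t, lo1 <= w -> w <= t -> t <= hi1 -> U t - U w <= t - w).
  { intros w t h1 h2 h3. pose proof (HUm w t h1 h2 h3). pose proof (FB (K t)). nra. }
  destruct Hbstar as [vh [Hvh [Hb0 [Hbc [Hbd [Hdisj Hbconst]]]]]].
  set (V := fun v => v - F2 (bstar v + v) * bstar v).
  change (U v1 <= V v1).
  assert (HW : forall t, lo1 <= t <= hi1 -> U t > V t ->
             0 <= bstar t /\ 0 < F2 (bstar t + t) /\ F2 (K t) <= F2 (bstar t + t)).
  { intros t Ht HUV. destruct (HUv t Ht) as [u1 u2]. unfold V in HUV.
    pose proof (FB (bstar t + t)) as fb.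
    assert (hb : 0 <= bstar t).
    { destruct (Rle_dec 0 (bstar t)); auto. nra. }
    assert (hF : 0 < F2 (bstar t + t)).
    { destruct (Rlt_dec 0 (F2 (bstar t + t))); auto.
      assert (F2 (bstar t + t) = 0) by lra. nra. }
    split; auto. split; auto.
    destruct (Rle_dec (K t) (bstar t + t)) as [l|l]. apply FM; auto.
    exfalso. assert (FM' := FM (bstar t + t) (K t) ltac:(lra)).
    pose proof (FB (K t)). nra. }
  assert (HD : forall t, lo1 < t < vh -> U t > V t ->
             derivable_pt_lim V t (F2 (bstar t + t))).
  { intros t Ht HUV. destruct (HW t ltac:(lra) HUV) as [hb [hF hK]].
    assert (n1 : bstar t + t <> lo2).
    { intro E. rewrite E, Hlo in hF by lra. lra. }
    assert (n2 : bstar t + t <> hi2).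
    { destruct Hdisj as [[_ Hd]|[_ Hd]]; apply Hd; lra. }
    pose proof (f2_nonneg lo2 hi2 F2 f2 HF2 (bstar t + t)) as f2p.
    apply is_derive_Reals.
    assert (Hval : forall (f : R -> R) x l l', is_derive f x l -> l = l' -> is_derive f x l')
      by (intros; subst; auto).
    eapply Hval.
    apply (der_V bstar F2 t).
    apply is_derive_Reals, Hbd; lra.
    apply is_derive_Reals, (F2_deriv lo2 hi2 F2 f2 HF2 H2); auto.
    change (@eq R (1 - (f2 (bstar t + t) * (1 / (f2 (bstar t + t) * bstar t + F2 (bstar t + t)) - 1 + 1) * bstar t + F2 (bstar t + t) * (1 / (f2 (bstar t + t) * bstar t + F2 (bstar t + t)) - 1))) (F2 (bstar t + t))).
    field. nra. }
  assert (HW0 : U lo1 <= V lo1).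
  { unfold V. rewrite Hb0. destruct (HUv lo1 ltac:(lra)). lra. }
  assert (Claim : forall c, lo1 <= c < vh -> U c <= V c).
  { intros c Hc. destruct (Rle_dec (U c) (V c)) as [l|l]; auto. exfalso.
    assert (Hc1 : lo1 < c).
    { destruct (Req_dec c lo1) as [E|NE]; [subst; lra|lra]. }
    set (g0 := U c - V c).
    set (eps := g0 / (2 * (c - lo1))).
    assert (Heps : 0 < eps) by (unfold eps, g0; apply Rdiv_lt_0_compat; lra).
    assert (Heps2 : eps * (c - lo1) = g0 / 2) by (unfold eps; field; lra).
    set (phi := fun v => U v - V v - eps * v).
    set (A := fun v => lo1 <= v <= c /\ phi v < phi c).
    assert (Alo : A lo1).
    { split. lra. unfold phi. fold g0. nra. }
    destruct (completeness A) as [t [Hub Hlub]].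
    { exists c. intros x [hx _]. lra. }
    { exists lo1. exact Alo. }
    assert (Ht1 : lo1 <= t) by (apply Hub; exact Alo).
    assert (Ht2 : t <= c) by (apply Hlub; intros x [hx _]; lra).
    assert (Hphit : phi c <= phi t).
    { destruct (Rle_dec (phi c) (phi t)) as [l'|l']; auto. exfalso.
      assert (Htc : t < c) by (destruct (Req_dec t c); [subst; lra|lra]).
      set (g := phi c - phi t).
      destruct (V_cont F2 bstar (fun y => lo1 <= y <= vh) t Hcont (Hbc t ltac:(lra)) (g/2) ltac:(unfold g; lra))
        as [d [Hd Hdd]].
      set (m := Rmin (d/2) (Rmin (c - t) (g/4))).
      assert (m1 : 0 < m) by (unfold m, g; repeat apply Rmin_glb_lt; lra).
      assert (m2 : m <= d/2) by apply Rmin_l.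
      assert (m3 : m <= c - t) by (eapply Rle_trans; [apply Rmin_r|apply Rmin_l]).
      assert (m4 : m <= g/4) by (eapply Rle_trans; [apply Rmin_r|apply Rmin_r]).
      assert (Au : A (t + m)).
      { split. lra.
        pose proof (HUup t (t + m) ltac:(lra) ltac:(lra) ltac:(lra)).
        assert (Hv : Rabs (V (t + m) - V t) < g/2) by (apply Hdd; [lra|rewrite Rabs_right; lra]).
        apply Rabs_def2 in Hv.
        assert (eps * (t + m) >= eps * t) by nra.
        assert (Eg : g = phi c - phi t) by reflexivity.
        assert (Ep1 : phi (t+m) = U (t+m) - V (t+m) - eps*(t+m)) by reflexivity.
        assert (Ep2 : phi t = U t - V t - eps*t) by reflexivity.
        lra. }
      assert (t + m <= t) by (apply Hub; exact Au). lra. }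
    assert (Ht3 : lo1 < t).
    { destruct (Req_dec t lo1) as [E|NE]; [|lra]. rewrite E in Hphit. destruct Alo. lra. }
    assert (HUVt : U t > V t).
    { assert (eps * (c - t) <= eps * (c - lo1)) by nra.
      unfold phi in Hphit. fold g0 in Hphit. unfold g0 in *. lra. }
    destruct (HW t ltac:(lra) HUVt) as [hb [hF hK]].
    destruct (HD t ltac:(lra) HUVt eps Heps) as [del Hdel].
    set (m := Rmin del (t - lo1)).
    assert (m1 : 0 < m) by (unfold m; apply Rmin_glb_lt; [apply cond_pos|lra]).
    assert (m2 : m <= del) by apply Rmin_l.
    assert (m3 : m <= t - lo1) by apply Rmin_r.
    destruct (classic (exists a, A a /\ t - m < a)) as [[a [Aa Ha]]|Hn].
    2: { assert (t <= t - m); [|lra]. apply Hlub. intros x Ax.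
         destruct (Rle_dec x (t - m)); auto. exfalso. apply Hn. exists x. split; auto. lra. }
    assert (Hat : a <= t) by (apply Hub; exact Aa).
    assert (Hat' : a < t).
    { destruct (Req_dec a t) as [E|NE]; [|lra]. subst a. destruct Aa. lra. }
    assert (Hq := Hdel (a - t) ltac:(lra) ltac:(rewrite Rabs_left; lra)).
    replace (t + (a - t)) with a in Hq by ring.
    apply Rabs_def2 in Hq.
    set (q := (V a - V t) / (a - t)) in Hq.
    assert (Eq : V t - V a = q * (t - a)) by (unfold q; field; lra).
    pose proof (HUm a t ltac:(destruct Aa; lra) ltac:(lra) ltac:(lra)) as Hm.
    assert (P1 : (t - a) * F2 (K t) <= (t - a) * F2 (bstar t + t)) by (apply Rmult_le_compat_l; lra).
    assert (P2 : q * (t - a) > (F2 (bstar t + t) - eps) * (t - a)) by (apply Rmult_gt_compat_r; lra).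
    destruct Aa as [_ Aa]. unfold phi in Aa, Hphit. nra. }
  assert (Hvh_le : U vh <= V vh).
  { destruct (Req_dec vh lo1) as [E|NE]. rewrite E; exact HW0.
    destruct (Rle_dec (U vh) (V vh)) as [l|l]; auto. exfalso.
    set (g := U vh - V vh).
    destruct (V_cont F2 bstar (fun y => lo1 <= y <= vh) vh Hcont (Hbc vh ltac:(lra)) (g/2) ltac:(unfold g; lra))
      as [d [Hd Hdd]].
    set (m := Rmin (d/2) (Rmin ((vh - lo1)/2) (g/4))).
    assert (m1 : 0 < m) by (unfold m, g; repeat apply Rmin_glb_lt; lra).
    assert (m2 : m <= d/2) by apply Rmin_l.
    assert (m3 : m <= (vh - lo1)/2) by (eapply Rle_trans; [apply Rmin_r|apply Rmin_l]).
    assert (m4 : m <= g/4) by (eapply Rle_trans; [apply Rmin_r|apply Rmin_r]).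
    assert (Hv : Rabs (V (vh - m) - V vh) < g/2) by (apply Hdd; [lra|rewrite Rabs_left; lra]).
    apply Rabs_def2 in Hv.
    pose proof (HUup (vh - m) vh ltac:(lra) ltac:(lra) ltac:(lra)).
    pose proof (Claim (vh - m) ltac:(lra)).
    assert (Eg : g = U vh - V vh) by reflexivity. lra. }
  destruct (Rlt_le_dec v1 vh) as [l|l].
  - apply Claim; lra.
  - destruct (Req_dec v1 vh) as [E|NE]. rewrite E; exact Hvh_le.
    destruct Hdisj as [[Hh _]|[Hh _]]; [|lra].
    pose proof (HUup vh v1 ltac:(lra) ltac:(lra) ltac:(lra)).
    assert (E1 : V v1 = v1 - bstar vh).
    { unfold V. rewrite Hbconst by lra. rewrite Hhi by lra. ring. }
    assert (E2 : V vh = vh - bstar vh).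
    { unfold V. rewrite Hh, Hhi by lra. ring. }
    lra.
Qed.
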